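(* Let $\Phi_U$ be a pmf on a countable $\mathcal U$, $\Phi_{V|U}$ a channel to a countable $\mathcal V$, and $Q_V=\Phi_V=\sum_u\Phi_U\Phi_{V|U}$. Let $u(1),\dots,u(M)$ be drawn independently from $\Phi_U$ and let $P_V(v)=\frac1M\sum_{j=1}^M\Phi_{V|U}(v|u(j))$. Then for every $\tau$, $$\mathbf E\|P_V-Q_V\|_{TV}\le\mathbf P_\Phi(\mathcal A'^c_\tau)+\delta'_\Phi(\tau),$$ where $\mathcal A'_\tau=\{(u,v):i_\Phi(u;v)\le\tau\}$ and $$\delta'_\Phi(\tau)=\frac{1}{2\sqrt M}\mathbf E_{\Phi_V}\sqrt{\mathbf E_{\Phi_{U|V}}\,2^{\,i_\Phi(U;V)}\mathbf 1_{\mathcal A'_\tau}(U,V)}\le\frac12\sqrt{\frac{2^\tau}{M}}.$$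
   Context: Expectation on the left is over the random codebook. $i_\Phi(u;v)=\log\frac{\Phi_{U,V}(u,v)}{\Phi_U(u)\Phi_V(v)}$, base-2 logarithm. Total variation is half the $\ell_1$ distance. *)

(* Defs.v *)
(* classical reals. Countable alphabets are encoded as nat. *)
From Stdlib Require Import Reals List Classical ClassicalEpsilon.
Open Scope R_scope.

Definition ssum (f : nat -> R) : R :=
  match excluded_middle_informative (exists l, infinite_sum f l) with
  | left H => proj1_sig (constructive_indefinite_description _ H)
  | right _ => 0
  end.

Definition log2 (x : R) : R := ln x / ln 2.

Definition outdist (PU : nat -> R) (W : nat -> nat -> R) (v : nat) : R :=
  ssum (fun u => PU u * W u v).

Definition info (PU : nat -> R) (W : nat -> nat -> R) (u v : nat) : R :=
  log2 ((PU u * W u v) / (PU u * outdist PU W v)).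

Definition indic (b : bool) : R := if b then 1 else 0.
Definition leRb (x y : R) : bool := if Rle_dec x y then true else false.

Definition tv (P Q : nat -> R) : R := / 2 * ssum (fun v => Rabs (P v - Q v)).

Definition codebook_out (W : nat -> nat -> R) (l : list nat) (v : nat) : R :=
  / INR (length l) * fold_right (fun u acc => W u v + acc) 0 l.

(* Expectation over a codebook of M codewords drawn i.i.d. from PU. *)
Fixpoint Ecb (PU : nat -> R) (M : nat) (F : list nat -> R) : R :=
  match M with
  | O => F nil
  | S m => ssum (fun u => PU u * Ecb PU m (fun l => F (u :: l)))
  end.

Definition prob_Ac (PU : nat -> R) (W : nat -> nat -> R) (tau : R) : R :=
  ssum (fun u => ssum (fun v =>
    PU u * W u v * indic (negb (leRb (info PU W u v) tau)))).

(* delta'_Phi(tau). Phi_{U|V}(u|v) = Phi_U(u) Phi_{V|U}(v|u) / Phi_V(v). *)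
Definition delta' (PU : nat -> R) (W : nat -> nat -> R) (M : nat) (tau : R) : R :=
  / (2 * sqrt (INR M)) *
  ssum (fun v => outdist PU W v *
    sqrt (ssum (fun u => (PU u * W u v / outdist PU W v)
                         * Rpower 2 (info PU W u v)
                         * indic (leRb (info PU W u v) tau)))).

(* Main.v *)
Require Import Defs.
From Stdlib Require Import Reals List.
From Stdlib Require Import Lra Lia FunctionalExtensionality Classical ClassicalEpsilon.
From Coquelicot Require Import Coquelicot.
Open Scope R_scope.

Lemma ssum_Series f : ex_series f -> ssum f = Series f.
Proof.
  intros H. unfold ssum. destruct excluded_middle_informative as [H1|H1].
  - destruct (constructive_indefinite_description _ H1) as [l Hl]. simpl.
    symmetry. apply is_series_unique. apply is_series_Reals. exact Hl.
  - exfalso. apply H1. exists (Series f). apply is_series_Reals.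
    apply Series_correct. exact H.
Qed.

Lemma ex_le (a b : nat -> R) : (forall n, Rabs (a n) <= b n) -> ex_series b -> ex_series a.
Proof. intros H Hb. apply (ex_series_le a b); [exact H|exact Hb]. Qed.

Lemma ex_plus (a b : nat -> R) : ex_series a -> ex_series b -> ex_series (fun n => a n + b n).
Proof. intros Ha Hb. exact (ex_series_plus a b Ha Hb). Qed.

Lemma ex_scal (c : R) (a : nat -> R) : ex_series a -> ex_series (fun n => c * a n).
Proof. intros Ha. exact (ex_series_scal_l c a Ha). Qed.

Lemma ex_minus (a b : nat -> R) : ex_series a -> ex_series b -> ex_series (fun n => a n - b n).
Proof. intros Ha Hb. exact (ex_series_minus a b Ha Hb). Qed.

Lemma ex_ext (a b : nat -> R) : (forall n, a n = b n) -> ex_series a -> ex_series b.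
Proof. intros H Ha. apply (ex_series_ext a b H Ha). Qed.

Lemma growing_sum a : (forall n, 0 <= a n) -> Un_growing (sum_f_R0 a).
Proof. intros H n. simpl. specialize (H (S n)). lra. Qed.

Lemma nonneg_bounded a B : (forall n, 0 <= a n) -> (forall N, sum_f_R0 a N <= B) ->
  ex_series a /\ Series a <= B.
Proof.
  intros H0 HB.
  destruct (growing_cv (sum_f_R0 a) (growing_sum a H0)) as [l Hl].
  { exists B. intros x [i ->]. apply HB. }
  assert (Hs : is_series a l) by (apply is_series_Reals; exact Hl).
  split. { exists l; exact Hs. }
  rewrite (is_series_unique a l Hs).
  destruct (Rle_dec l B) as [?|Hn]; [assumption|].
  exfalso. destruct (Hl (l - B)) as [N HN]; [lra|].
  specialize (HN N (le_n _)). specialize (HB N). unfold Rdist in HN.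
  apply Rabs_def2 in HN. lra.
Qed.

Lemma partial_le a N : (forall n, 0 <= a n) -> ex_series a -> sum_f_R0 a N <= Series a.
Proof.
  intros H0 [l Hl]. rewrite (is_series_unique a l Hl).
  apply growing_ineq. apply growing_sum; auto. apply is_series_Reals. exact Hl.
Qed.

Lemma Series_nonneg a : (forall n, 0 <= a n) -> ex_series a -> 0 <= Series a.
Proof. intros H0 Ha. apply Rle_trans with (sum_f_R0 a 0). simpl; auto. apply partial_le; auto. Qed.

Lemma term_le a n : (forall n, 0 <= a n) -> ex_series a -> a n <= Series a.
Proof.
  intros H0 Ha. apply Rle_trans with (sum_f_R0 a n); [|apply partial_le; auto].
  destruct n; simpl; [lra|].
  assert (0 <= sum_f_R0 a n). { clear -H0. induction n; simpl; auto. specialize (H0 (S n)); lra. }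
  lra.
Qed.

Lemma Series_le_bound a B : (forall n, 0 <= a n) -> (forall N, sum_f_R0 a N <= B) -> Series a <= B.
Proof. intros. apply (nonneg_bounded a B); auto. Qed.

Lemma Series_zero_terms a : (forall n, 0 <= a n) -> ex_series a -> Series a = 0 -> forall n, a n = 0.
Proof. intros H0 Ha Hs n. pose proof (term_le a n H0 Ha). specialize (H0 n). lra. Qed.

Lemma Series_const0 : Series (fun _ => 0) = 0.
Proof. rewrite (Series_ext _ (fun n => 0 * 0)) by (intros; ring). rewrite Series_scal_l. ring. Qed.

Lemma Series_mono a b : (forall n, a n <= b n) -> ex_series a -> ex_series b -> Series a <= Series b.
Proof.
  intros H Ha Hb. assert (0 <= Series (fun n => b n - a n)).
  { apply Series_nonneg. intros n; specialize (H n); lra. apply ex_minus; auto. }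
  rewrite Series_minus in H0 by auto. lra.
Qed.

Lemma FI (g : nat -> nat -> R) N : (forall k, ex_series (g k)) ->
  ex_series (fun n => sum_f_R0 (fun k => g k n) N) /\
  Series (fun n => sum_f_R0 (fun k => g k n) N) = sum_f_R0 (fun k => Series (g k)) N.
Proof.
  intros H. induction N as [|N [IH1 IH2]]; simpl.
  - split; [apply H | reflexivity].
  - split. apply (ex_plus (fun n => sum_f_R0 (fun k => g k n) N) (g (S N))); auto. rewrite Series_plus; auto. rewrite IH2. reflexivity.
Qed.

Lemma FL (g : nat -> nat -> R) (l : list nat) : (forall k, ex_series (g k)) ->
  ex_series (fun n => fold_right (fun u acc => g u n + acc) 0 l) /\
  Series (fun n => fold_right (fun u acc => g u n + acc) 0 l) =
    fold_right (fun u acc => Series (g u) + acc) 0 l.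
Proof.
  intros H. induction l as [|u l [IH1 IH2]]; simpl.
  - split. exists 0. apply is_series_Reals. intros e He. exists 0%nat. intros n _.
    rewrite (sum_eq_R0 _ n) by auto. unfold Rdist. rewrite Rminus_0_r, Rabs_R0. lra.
    apply Series_const0.
  - split. apply (ex_plus (g u) (fun n => fold_right (fun u acc => g u n + acc) 0 l)); auto.
    rewrite Series_plus; auto. rewrite IH2. reflexivity.
Qed.

Lemma tonelli (f : nat -> nat -> R) : (forall u v, 0 <= f u v) ->
  (forall u, ex_series (f u)) -> ex_series (fun u => Series (f u)) ->
  (forall v, ex_series (fun u => f u v)) /\
  ex_series (fun v => Series (fun u => f u v)) /\
  Series (fun v => Series (fun u => f u v)) = Series (fun u => Series (f u)).
Proof.
  intros H0 H1 H2.
  assert (Hv : forall v, ex_series (fun u => f u v)).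
  { intros v. apply (ex_le _ (fun u => Series (f u))); auto.
    intros u. rewrite Rabs_pos_eq by auto. apply term_le; auto. }
  assert (A : ex_series (fun v => Series (fun u => f u v)) /\
              Series (fun v => Series (fun u => f u v)) <= Series (fun u => Series (f u))).
  { apply nonneg_bounded.
    - intros v. apply Series_nonneg; auto.
    - intros N. destruct (FI (fun v u => f u v) N Hv) as [E1 E2]. rewrite <- E2.
      apply Series_le; auto. intros u. split.
      + clear -H0. induction N; simpl; auto. specialize (H0 u (S N)). lra.
      + apply partial_le; auto. }
  destruct A as [A1 A2]. split; [auto|split; [auto|]].
  apply Rle_antisym; auto.
  apply Series_le_bound. intros; apply Series_nonneg; auto.
  intros N. destruct (FI f N H1) as [E1 E2]. rewrite <- E2.
  apply Series_le; auto. intros v. split.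
  + clear -H0. induction N; simpl; auto. specialize (H0 (S N) v). lra.
  + apply partial_le; auto.
Qed.

Definition prob (p : nat -> R) := (forall u, 0 <= p u) /\ is_series p 1.
Definition bnd m (F : list nat -> R) := exists B, forall l, length l = m -> Rabs (F l) <= B.

Lemma prob_ex p : prob p -> ex_series p.
Proof. intros [_ H]. exists 1; exact H. Qed.
Lemma prob_1 p : prob p -> Series p = 1.
Proof. intros [_ H]. apply is_series_unique; exact H. Qed.

Lemma ser_pg p g B : prob p -> (forall u, Rabs (g u) <= B) -> ex_series (fun u => p u * g u).
Proof.
  intros Hp Hg. apply (ex_le _ (fun u => B * p u)).
  - intros u. rewrite Rabs_mult, Rabs_pos_eq by apply Hp. rewrite Rmult_comm.
    apply Rmult_le_compat_r. apply Hp. auto.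
  - apply ex_scal. apply prob_ex; auto.
Qed.

Lemma Series_pg_bound p g B : prob p -> (forall u, Rabs (g u) <= B) ->
  Rabs (Series (fun u => p u * g u)) <= B.
Proof.
  intros Hp Hg.
  assert (E : ex_series (fun u => B * p u)) by (apply ex_scal; apply prob_ex; auto).
  assert (L : forall u, Rabs (p u * g u) <= B * p u).
  { intros u. rewrite Rabs_mult, Rabs_pos_eq by apply Hp. rewrite Rmult_comm.
    apply Rmult_le_compat_r. apply Hp. auto. }
  eapply Rle_trans. apply Series_Rabs. apply (ex_le _ (fun u => B * p u)); auto.
  intros u. rewrite Rabs_Rabsolu; auto.
  eapply Rle_trans. apply (Series_le _ (fun u => B * p u)); auto.
  intros u; split; [apply Rabs_pos|auto].
  rewrite Series_scal_l, prob_1 by auto. lra.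
Qed.

Lemma Ecb_S p m F : Ecb p (S m) F = ssum (fun u => p u * Ecb p m (fun l => F (u :: l))).
Proof. reflexivity. Qed.

Lemma Ecb_bound p m : prob p -> forall F B, (forall l, length l = m -> Rabs (F l) <= B) ->
  Rabs (Ecb p m F) <= B.
Proof.
  intros Hp. induction m as [|m IH]; intros F B HF.
  - simpl. apply HF; reflexivity.
  - rewrite Ecb_S. assert (Hg : forall u, Rabs (Ecb p m (fun l => F (u :: l))) <= B).
    { intros u. apply IH. intros l Hl. apply HF. simpl; auto. }
    rewrite ssum_Series by (eapply ser_pg; eauto).
    eapply Series_pg_bound; eauto.
Qed.

Lemma bnd_Ecb p m F : prob p -> bnd (S m) F -> exists B, forall u, Rabs (Ecb p m (fun l => F (u :: l))) <= B.
Proof.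
  intros Hp [B HB]. exists B. intros u. apply Ecb_bound; auto. intros l Hl; apply HB; simpl; auto.
Qed.

Lemma bnd_cons m F u : bnd (S m) F -> bnd m (fun l => F (u :: l)).
Proof. intros [B HB]; exists B; intros l Hl; apply HB; simpl; auto. Qed.

Lemma Ecb_ext p m : forall F G, (forall l, length l = m -> F l = G l) -> Ecb p m F = Ecb p m G.
Proof.
  induction m as [|m IH]; intros F G H.
  - simpl. apply H; reflexivity.
  - rewrite !Ecb_S. f_equal. apply functional_extensionality. intros u. f_equal.
    apply IH. intros l Hl. apply H. simpl; auto.
Qed.

Lemma Ecb_plus p m : prob p -> forall F G, bnd m F -> bnd m G ->
  Ecb p m (fun l => F l + G l) = Ecb p m F + Ecb p m G.
Proof.
  intros Hp. induction m as [|m IH]; intros F G HF HG.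
  - reflexivity.
  - rewrite !Ecb_S.
    destruct (bnd_Ecb p m F Hp HF) as [B1 H1]. destruct (bnd_Ecb p m G Hp HG) as [B2 H2].
    rewrite (ssum_Series (fun u => p u * Ecb p m (fun l => F (u :: l)))) by (eapply ser_pg; eauto).
    rewrite (ssum_Series (fun u => p u * Ecb p m (fun l => G (u :: l)))) by (eapply ser_pg; eauto).
    rewrite <- Series_plus by (eapply ser_pg; eauto).
    rewrite ssum_Series.
    + apply Series_ext. intros u. rewrite IH by (apply bnd_cons; auto). ring.
    + apply (ex_ext (fun u => p u * Ecb p m (fun l => F (u :: l)) + p u * Ecb p m (fun l => G (u :: l)))).
      intros u. rewrite IH by (apply bnd_cons; auto). ring.
      apply ex_plus; eapply ser_pg; eauto.
Qed.

Lemma Ecb_scal p m : prob p -> forall F c, bnd m F ->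
  Ecb p m (fun l => c * F l) = c * Ecb p m F.
Proof.
  intros Hp. induction m as [|m IH]; intros F c HF.
  - reflexivity.
  - rewrite !Ecb_S.
    destruct (bnd_Ecb p m F Hp HF) as [B1 H1].
    rewrite (ssum_Series (fun u => p u * Ecb p m (fun l => F (u :: l)))) by (eapply ser_pg; eauto).
    rewrite <- Series_scal_l. rewrite ssum_Series.
    + apply Series_ext. intros u. rewrite IH by (apply bnd_cons; auto). ring.
    + apply (ex_ext (fun u => c * (p u * Ecb p m (fun l => F (u :: l))))).
      intros u. rewrite IH by (apply bnd_cons; auto). ring.
      apply ex_scal; eapply ser_pg; eauto.
Qed.

Lemma Ecb_const p m c : prob p -> Ecb p m (fun _ => c) = c.
Proof.
  intros Hp. induction m as [|m IH]. reflexivity.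
  rewrite Ecb_S. rewrite IH. rewrite ssum_Series.
  rewrite (Series_ext _ (fun u => c * p u)) by (intros; ring).
  rewrite Series_scal_l, prob_1 by auto. ring.
  apply (ex_ext (fun u => c * p u)). intros; ring. apply ex_scal, prob_ex; auto.
Qed.

Lemma Ecb_mono p m : prob p -> forall F G, bnd m F -> bnd m G ->
  (forall l, length l = m -> F l <= G l) -> Ecb p m F <= Ecb p m G.
Proof.
  intros Hp. induction m as [|m IH]; intros F G HF HG H.
  - simpl. apply H; reflexivity.
  - rewrite !Ecb_S.
    destruct (bnd_Ecb p m F Hp HF) as [B1 H1]. destruct (bnd_Ecb p m G Hp HG) as [B2 H2].
    rewrite !ssum_Series by (eapply ser_pg; eauto).
    apply Series_mono; try (eapply ser_pg; eauto).
    intros u. apply Rmult_le_compat_l. apply Hp. apply IH; try (apply bnd_cons; auto).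
    intros l Hl; apply H; simpl; auto.
Qed.

Lemma Ecb_nonneg p m F : prob p -> bnd m F -> (forall l, length l = m -> 0 <= F l) -> 0 <= Ecb p m F.
Proof.
  intros Hp HF H. rewrite <- (Ecb_const p m 0 Hp). apply Ecb_mono; auto.
  exists 0; intros; rewrite Rabs_R0; lra.
Qed.

Lemma bnd_plus m F G : bnd m F -> bnd m G -> bnd m (fun l => F l + G l).
Proof.
  intros [B1 H1] [B2 H2]. exists (B1 + B2). intros l Hl.
  eapply Rle_trans. apply Rabs_triang. specialize (H1 l Hl); specialize (H2 l Hl); lra.
Qed.
Lemma bnd_scal m F c : bnd m F -> bnd m (fun l => c * F l).
Proof.
  intros [B1 H1]. exists (Rabs c * B1). intros l Hl. rewrite Rabs_mult.
  apply Rmult_le_compat_l. apply Rabs_pos. auto.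
Qed.
Lemma bnd_const m c : bnd m (fun _ => c).
Proof. exists (Rabs c). intros; lra. Qed.
Lemma bnd_mult m F G : bnd m F -> bnd m G -> bnd m (fun l => F l * G l).
Proof.
  intros [B1 H1] [B2 H2]. exists (B1 * B2). intros l Hl. rewrite Rabs_mult.
  apply Rmult_le_compat; try apply Rabs_pos; auto.
Qed.
Lemma bnd_abs m F : bnd m F -> bnd m (fun l => Rabs (F l)).
Proof. intros [B1 H1]. exists B1. intros l Hl. rewrite Rabs_Rabsolu. auto. Qed.
Lemma bnd_le m F G : bnd m G -> (forall l, length l = m -> Rabs (F l) <= Rabs (G l)) -> bnd m F.
Proof. intros [B1 H1] H. exists B1. intros l Hl. eapply Rle_trans; eauto. Qed.

Lemma fold_bound (g : nat -> R) C l : (forall u, Rabs (g u) <= C) ->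
  Rabs (fold_right (fun u acc => g u + acc) 0 l) <= INR (length l) * C.
Proof.
  intros H. induction l as [|u l IH]; cbn [fold_right length].
  - change (INR 0) with 0. rewrite Rabs_R0; lra.
  - rewrite S_INR. eapply Rle_trans. apply Rabs_triang. specialize (H u). lra.
Qed.
Lemma bnd_fold m (g : nat -> R) C : (forall u, Rabs (g u) <= C) ->
  bnd m (fun l => fold_right (fun u acc => g u + acc) 0 l).
Proof. intros H. exists (INR m * C). intros l <-. apply fold_bound; auto. Qed.

Lemma Ecb_fold p m (g : nat -> R) C : prob p -> (forall u, Rabs (g u) <= C) ->
  Ecb p m (fun l => fold_right (fun u acc => g u + acc) 0 l) = INR m * Series (fun u => p u * g u).
Proof.
  intros Hp Hg. induction m as [|m IH].
  - simpl. ring.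
  - assert (IH0 : Ecb p m (fold_right (fun u acc => g u + acc) 0) = INR m * Series (fun u => p u * g u)) by exact IH.
    rewrite Ecb_S.
    rewrite (ssum_Series).
    + rewrite (Series_ext _ (fun u => p u * g u + (INR m * Series (fun u => p u * g u)) * p u)).
      rewrite Series_plus. rewrite Series_scal_l. rewrite (prob_1 p Hp). rewrite S_INR; ring.
      eapply ser_pg; eauto. apply ex_scal, prob_ex; auto.
      intros u. simpl.
      rewrite (Ecb_plus p m Hp (fun _ => g u)); [|apply bnd_const|eapply bnd_fold; eauto].
      cbv beta. rewrite Ecb_const by auto. first [rewrite IH | rewrite IH0]. ring.
    + apply (ex_ext (fun u => p u * g u + (INR m * Series (fun u => p u * g u)) * p u)).
      intros u. simpl.
      rewrite (Ecb_plus p m Hp (fun _ => g u)); [|apply bnd_const|eapply bnd_fold; eauto].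
      cbv beta. rewrite Ecb_const by auto. first [rewrite IH | rewrite IH0]. ring.
      apply ex_plus. eapply ser_pg; eauto. apply ex_scal, prob_ex; auto.
Qed.

Lemma jensen1 p g B : prob p -> (forall u, 0 <= g u <= B) ->
  Series (fun u => p u * sqrt (g u)) <= sqrt (Series (fun u => p u * g u)).
Proof.
  intros Hp Hg.
  assert (Eg : ex_series (fun u => p u * g u)).
  { apply (ser_pg p g B Hp). intros u; rewrite Rabs_pos_eq; apply Hg. }
  assert (Es : ex_series (fun u => p u * sqrt (g u))).
  { apply (ser_pg p _ (sqrt B) Hp). intros u; rewrite Rabs_pos_eq by apply sqrt_pos.
    apply sqrt_le_1_alt. apply Hg. }
  assert (Hpg : forall u, 0 <= p u * g u).
  { intros u. apply Rmult_le_pos. apply Hp. apply Hg. }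
  set (c := Series (fun u => p u * g u)).
  assert (Hc : 0 <= c) by (apply Series_nonneg; auto).
  destruct (Req_dec c 0) as [Hc0|Hc0].
  - pose proof (Series_zero_terms _ Hpg Eg Hc0) as Z.
    rewrite (Series_ext _ (fun _ => 0)). rewrite Series_const0. apply sqrt_pos.
    intros u. specialize (Z u). destruct (Rmult_integral _ _ Z) as [Z1|Z1].
    rewrite Z1; ring. rewrite Z1, sqrt_0; ring.
  - set (s := sqrt c).
    assert (Hs : 0 < s) by (apply sqrt_lt_R0; lra).
    assert (Hss : s * s = c) by (apply sqrt_sqrt; lra).
    apply Rle_trans with (Series (fun u => / (2 * s) * (p u * g u) + (s / 2) * p u)).
    + apply Series_mono; auto.
      2: { apply ex_plus. apply ex_scal; auto. apply ex_scal. apply prob_ex; auto. }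
      intros u. destruct (Hg u) as [G0 _]. pose proof (sqrt_sqrt (g u) G0) as Q.
      pose proof (sqrt_pos (g u)). destruct Hp as [Hp0 _]. specialize (Hp0 u).
      assert (A : 2 * s * sqrt (g u) <= g u + s * s).
      { assert (0 <= (sqrt (g u) - s) * (sqrt (g u) - s)) by (apply Rle_0_sqr). nra. }
      apply Rmult_le_reg_l with (2 * s). lra.
      replace (2 * s * (/ (2 * s) * (p u * g u) + s / 2 * p u)) with (p u * (g u + s * s))
        by (field; lra).
      replace (2 * s * (p u * sqrt (g u))) with (p u * (2 * s * sqrt (g u))) by ring.
      apply Rmult_le_compat_l; auto.
    + rewrite Series_plus. rewrite !Series_scal_l. rewrite (prob_1 p Hp). fold c.
      rewrite <- Hss. right. field. lra.
      apply ex_scal; auto. apply ex_scal, prob_ex; auto.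
Qed.

Lemma Ecb_sqrt p m : prob p -> forall G, bnd m G -> (forall l, length l = m -> 0 <= G l) ->
  Ecb p m (fun l => sqrt (G l)) <= sqrt (Ecb p m G).
Proof.
  intros Hp. induction m as [|m IH]; intros G HG H0.
  - simpl. lra.
  - rewrite !Ecb_S. destruct HG as [B HB].
    assert (Hg : forall u, 0 <= Ecb p m (fun l => G (u :: l)) <= B).
    { intros u. split. apply Ecb_nonneg; auto. apply bnd_cons. exists B; auto.
      intros l Hl; apply H0; simpl; auto.
      eapply Rle_trans. apply Rle_abs. apply Ecb_bound; auto. intros l Hl; apply HB; simpl; auto. }
    assert (HB' : forall u, Rabs (Ecb p m (fun l => sqrt (G (u :: l)))) <= sqrt B).
    { intros u. apply Ecb_bound; auto. intros l Hl. rewrite Rabs_pos_eq by apply sqrt_pos.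
      apply sqrt_le_1_alt. eapply Rle_trans. apply Rle_abs. apply HB; simpl; auto. }
    rewrite !ssum_Series.
    2: { apply (ser_pg p _ B Hp). intros u. rewrite Rabs_pos_eq; apply Hg. }
    2: { apply (ser_pg p _ (sqrt B) Hp). auto. }
    eapply Rle_trans. 2: { apply (jensen1 p _ B Hp Hg). }
    apply Series_mono.
    + intros u. apply Rmult_le_compat_l. apply Hp. apply IH.
      exists B; intros l Hl; apply HB; simpl; auto. intros l Hl; apply H0; simpl; auto.
    + apply (ser_pg p _ (sqrt B) Hp). auto.
    + apply (ser_pg p _ (sqrt B) Hp). intros u. rewrite Rabs_pos_eq by apply sqrt_pos.
      apply sqrt_le_1_alt. apply Hg.
Qed.

Lemma Ecb_ton p m : prob p -> forall F : list nat -> nat -> R,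
  (forall l, length l = m -> forall v, 0 <= F l v) ->
  (forall l, length l = m -> ex_series (F l)) ->
  (exists B, forall l, length l = m -> Series (F l) <= B) ->
  ex_series (fun v => Ecb p m (fun l => F l v)) /\
  Series (fun v => Ecb p m (fun l => F l v)) = Ecb p m (fun l => Series (F l)).
Proof.
  intros Hp. induction m as [|m IH]; intros F H0 H1 [B HB].
  - simpl. split; [apply H1; reflexivity|reflexivity].
  - assert (IHu : forall u, ex_series (fun v => Ecb p m (fun l => F (u :: l) v)) /\
       Series (fun v => Ecb p m (fun l => F (u :: l) v)) = Ecb p m (fun l => Series (F (u :: l)))).
    { intros u. apply (IH (fun l => F (u :: l))).
      intros l Hl; apply H0; simpl; auto. intros l Hl; apply H1; simpl; auto.
      exists B; intros l Hl; apply HB; simpl; auto. }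
    assert (Hbv : forall l, length l = S m -> forall v, Rabs (F l v) <= B).
    { intros l Hl v. rewrite Rabs_pos_eq by auto. eapply Rle_trans. apply term_le; auto. auto. }
    assert (Hh : forall u, Rabs (Ecb p m (fun l => Series (F (u :: l)))) <= B).
    { intros u. apply Ecb_bound; auto. intros l Hl. rewrite Rabs_pos_eq. apply HB; simpl; auto.
      apply Series_nonneg. apply H0; simpl; auto. apply H1; simpl; auto. }
    set (f := fun u v => p u * Ecb p m (fun l => F (u :: l) v)).
    assert (Hf0 : forall u v, 0 <= f u v).
    { intros u v. unfold f. apply Rmult_le_pos. apply Hp. apply Ecb_nonneg; auto.
      exists B. intros l Hl. apply Hbv; simpl; auto. intros l Hl; apply H0; simpl; auto. }
    assert (Hf1 : forall u, ex_series (f u)).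
    { intros u. unfold f. apply ex_scal. apply IHu. }
    assert (Hf2 : forall u, Series (f u) = p u * Ecb p m (fun l => Series (F (u :: l)))).
    { intros u. unfold f. rewrite Series_scal_l. f_equal. apply IHu. }
    assert (Hf3 : ex_series (fun u => Series (f u))).
    { apply (ex_ext (fun u => p u * Ecb p m (fun l => Series (F (u :: l))))).
      intros u; rewrite Hf2; auto. eapply ser_pg; eauto. }
    destruct (tonelli f Hf0 Hf1 Hf3) as [T1 [T2 T3]].
    assert (EQ : forall v, Ecb p (S m) (fun l => F l v) = Series (fun u => f u v)).
    { intros v. rewrite Ecb_S. rewrite ssum_Series. reflexivity. apply T1. }
    split.
    + apply (ex_ext (fun v => Series (fun u => f u v))). intros; rewrite EQ; auto. auto.
    + rewrite (Series_ext _ (fun v => Series (fun u => f u v))) by (intros; apply EQ).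
      rewrite T3. rewrite Ecb_S. rewrite ssum_Series. apply Series_ext; auto.
      eapply ser_pg; eauto.
Qed.

Definition fsum (g : nat -> R) (l : list nat) : R := fold_right (fun u acc => g u + acc) 0 l.

Lemma Ecb_var p m (Y : nat -> R) C : prob p -> (forall u, Rabs (Y u) <= C) ->
  Ecb p m (fun l => fsum (fun u => Y u - Series (fun u => p u * Y u)) l *
                    fsum (fun u => Y u - Series (fun u => p u * Y u)) l) =
  INR m * Series (fun u => p u * ((Y u - Series (fun u => p u * Y u)) * (Y u - Series (fun u => p u * Y u)))).
Proof.
  intros Hp HY.
  set (mu := Series (fun u => p u * Y u)).
  assert (Hmu : Rabs mu <= C) by (apply Series_pg_bound; auto).
  set (g := fun u => Y u - mu).
  assert (Hg : forall u, Rabs (g u) <= C + C).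
  { intros u. unfold g. unfold Rminus. eapply Rle_trans. apply Rabs_triang. rewrite Rabs_Ropp.
    specialize (HY u). lra. }
  assert (Hg0 : Series (fun u => p u * g u) = 0).
  { unfold g. rewrite (Series_ext _ (fun u => p u * Y u - mu * p u)) by (intros; ring).
    rewrite Series_minus. rewrite Series_scal_l, (prob_1 p Hp). fold mu. ring.
    eapply ser_pg; eauto. apply ex_scal, prob_ex; auto. }
  assert (HS : forall k, bnd k (fun l => fsum g l)).
  { intros k. unfold fsum. eapply bnd_fold; eauto. }
  assert (Eg2 : ex_series (fun u => p u * (g u * g u))).
  { apply (ser_pg p _ ((C + C) * (C + C)) Hp). intros u. rewrite Rabs_mult.
    apply Rmult_le_compat; try apply Rabs_pos; auto. }
  change (Ecb p m (fun l => fsum g l * fsum g l) = INR m * Series (fun u => p u * (g u * g u))).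
  assert (EF1 : forall k, Ecb p k (fun l => fsum g l) = 0).
  { intros k. unfold fsum. rewrite (Ecb_fold p k g (C + C)); auto. rewrite Hg0; ring. }
  assert (EF2 : forall k, Ecb p k (fsum g) = 0) by exact EF1.
  induction m as [|m IH].
  - simpl. unfold fsum; simpl. ring.
  - rewrite Ecb_S. rewrite ssum_Series.
    + rewrite (Series_ext _ (fun u => p u * (g u * g u) + (INR m * Series (fun u => p u * (g u * g u))) * p u)).
      rewrite Series_plus. rewrite Series_scal_l, (prob_1 p Hp). rewrite S_INR. ring.
      auto. apply ex_scal, prob_ex; auto.
      intros u.
      rewrite (Ecb_ext p m _ (fun l => g u * g u + ((2 * g u) * fsum g l + fsum g l * fsum g l))).
      2: { intros l _. unfold fsum; simpl. ring. }
      rewrite Ecb_plus; auto. 2: apply bnd_const. 2: { apply bnd_plus. apply bnd_scal; auto. apply bnd_mult; auto. }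
      rewrite Ecb_plus; auto. 2: apply bnd_scal; auto. 2: apply bnd_mult; auto.
      rewrite (Ecb_scal p m Hp (fun l => fsum g l) (2 * g u)); auto. rewrite Ecb_const by auto. rewrite IH.
      first [rewrite EF1 | rewrite EF2]. ring.
    + apply (ex_ext (fun u => p u * (g u * g u) + (INR m * Series (fun u => p u * (g u * g u))) * p u)).
      2: { apply ex_plus; auto. apply ex_scal, prob_ex; auto. }
      intros u.
      rewrite (Ecb_ext p m _ (fun l => g u * g u + ((2 * g u) * fsum g l + fsum g l * fsum g l))).
      2: { intros l _. unfold fsum; simpl. ring. }
      rewrite Ecb_plus; auto. 2: apply bnd_const. 2: { apply bnd_plus. apply bnd_scal; auto. apply bnd_mult; auto. }
      rewrite Ecb_plus; auto. 2: apply bnd_scal; auto. 2: apply bnd_mult; auto.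
      rewrite (Ecb_scal p m Hp (fun l => fsum g l) (2 * g u)); auto. rewrite Ecb_const by auto. rewrite IH.
      first [rewrite EF1 | rewrite EF2]. ring.
Qed.

Definition Hyp (PU : nat -> R) (W : nat -> nat -> R) :=
  prob PU /\ (forall u v, 0 <= W u v) /\ (forall u, is_series (W u) 1).

Definition aa PU W tau u v := indic (leRb (info PU W u v) tau).
Definition bb PU W tau u v := indic (negb (leRb (info PU W u v) tau)).
Definition Yf PU W tau (v u : nat) := W u v * aa PU W tau u v.
Definition Zf PU W tau (v u : nat) := W u v * bb PU W tau u v.
Definition Q1 PU W tau v := Series (fun u => PU u * Yf PU W tau v u).
Definition Q2 PU W tau v := Series (fun u => PU u * Zf PU W tau v u).
Definition TT PU W tau v := Series (fun u => PU u * (Yf PU W tau v u * Yf PU W tau v u)).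

Lemma ab_props PU W tau u v :
  aa PU W tau u v + bb PU W tau u v = 1 /\ aa PU W tau u v * aa PU W tau u v = aa PU W tau u v /\
  0 <= aa PU W tau u v <= 1 /\ 0 <= bb PU W tau u v <= 1.
Proof. unfold aa, bb, indic. destruct (leRb _ _); simpl; lra. Qed.

Lemma W_props PU W u v : Hyp PU W -> 0 <= W u v <= 1.
Proof.
  intros [_ [H0 H1]]. split; auto.
  rewrite <- (is_series_unique _ _ (H1 u)). apply term_le; auto. exists 1; auto.
Qed.

Lemma W_ex PU W u : Hyp PU W -> ex_series (W u).
Proof. intros [_ [_ H1]]. exists 1; auto. Qed.

Lemma Y_props PU W tau v u : Hyp PU W -> 0 <= Yf PU W tau v u <= 1 /\ 0 <= Zf PU W tau v u <= 1.
Proof.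
  intros H. destruct (W_props PU W u v H). destruct (ab_props PU W tau u v) as [_ [_ [? ?]]].
  unfold Yf, Zf. split; split; nra.
Qed.

Lemma Y_abs PU W tau v u : Hyp PU W -> Rabs (Yf PU W tau v u) <= 1 /\ Rabs (Zf PU W tau v u) <= 1.
Proof. intros H. destruct (Y_props PU W tau v u H) as [[??][??]]. rewrite !Rabs_pos_eq; lra. Qed.

Lemma q_eq PU W v : Hyp PU W ->
  ex_series (fun u => PU u * W u v) /\ outdist PU W v = Series (fun u => PU u * W u v).
Proof.
  intros H. assert (E : ex_series (fun u => PU u * W u v)).
  { apply (ser_pg PU _ 1). apply H. intros u. destruct (W_props PU W u v H).
    rewrite Rabs_pos_eq; lra. }
  split; auto. unfold outdist. apply ssum_Series; auto.
Qed.

Lemma q_nonneg PU W v : Hyp PU W -> 0 <= outdist PU W v.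
Proof.
  intros H. destruct (q_eq PU W v H) as [E ->]. apply Series_nonneg; auto.
  intros u. apply Rmult_le_pos. apply H. apply H.
Qed.

Lemma q_sum PU W : Hyp PU W -> ex_series (outdist PU W) /\ Series (outdist PU W) = 1.
Proof.
  intros H. set (f := fun u v => PU u * W u v).
  assert (Hf0 : forall u v, 0 <= f u v) by (intros; apply Rmult_le_pos; apply H).
  assert (Hf1 : forall u, ex_series (f u)) by (intros; apply ex_scal, (W_ex PU W u H)).
  assert (Hf2 : forall u, Series (f u) = PU u).
  { intros u. unfold f. rewrite Series_scal_l. destruct H as [_ [_ H]].
    rewrite (is_series_unique _ _ (H u)). ring. }
  assert (Hf3 : ex_series (fun u => Series (f u))).
  { apply (ex_ext PU). intros; auto. apply prob_ex, H. }
  destruct (tonelli f Hf0 Hf1 Hf3) as [T1 [T2 T3]].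
  assert (EQ : forall v, outdist PU W v = Series (fun u => f u v)) by (intros v; apply q_eq; auto).
  split. apply (ex_ext (fun v => Series (fun u => f u v))); auto.
  rewrite (Series_ext _ _ EQ), T3, (Series_ext _ _ Hf2). apply prob_1, H.
Qed.

Lemma Q_props PU W tau v : Hyp PU W ->
  ex_series (fun u => PU u * Yf PU W tau v u) /\ ex_series (fun u => PU u * Zf PU W tau v u) /\
  ex_series (fun u => PU u * (Yf PU W tau v u * Yf PU W tau v u)) /\
  Q1 PU W tau v + Q2 PU W tau v = outdist PU W v /\
  0 <= Q1 PU W tau v /\ 0 <= Q2 PU W tau v /\ 0 <= TT PU W tau v.
Proof.
  intros H.
  assert (E1 : ex_series (fun u => PU u * Yf PU W tau v u)).
  { apply (ser_pg PU _ 1). apply H. intros u; apply Y_abs; auto. }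
  assert (E2 : ex_series (fun u => PU u * Zf PU W tau v u)).
  { apply (ser_pg PU _ 1). apply H. intros u; apply Y_abs; auto. }
  assert (E3 : ex_series (fun u => PU u * (Yf PU W tau v u * Yf PU W tau v u))).
  { apply (ser_pg PU _ 1). apply H. intros u. destruct (Y_props PU W tau v u H) as [[??]_].
    rewrite Rabs_pos_eq; nra. }
  assert (P0 : forall u, 0 <= PU u) by apply H.
  do 3 (split; auto). split.
  - unfold Q1, Q2. rewrite <- Series_plus by auto. destruct (q_eq PU W v H) as [_ ->].
    apply Series_ext. intros u. unfold Yf, Zf. destruct (ab_props PU W tau u v) as [A _].
    replace (W u v) with (W u v * (aa PU W tau u v + bb PU W tau u v)) at 3 by (rewrite A; ring).
    ring.
  - split; [|split]; apply Series_nonneg; auto; intros u; apply Rmult_le_pos; auto;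
      destruct (Y_props PU W tau v u H) as [[??][??]]; nra.
Qed.

Lemma Rpower_log2 x : 0 < x -> Rpower 2 (log2 x) = x.
Proof.
  intros Hx. unfold Rpower, log2.
  assert (0 < ln 2) by (rewrite <- ln_1; apply ln_increasing; lra).
  replace (ln x / ln 2 * ln 2) with (ln x) by (field; lra). apply exp_ln; auto.
Qed.

Lemma info_pos PU W u v : Hyp PU W -> PU u * W u v <> 0 ->
  0 < outdist PU W v /\ Rpower 2 (info PU W u v) = W u v / outdist PU W v.
Proof.
  intros H Hne.
  assert (Hp : 0 < PU u).
  { destruct H as [[H0 _] _]. destruct (Rle_lt_or_eq_dec _ _ (H0 u)) as [?|E]; auto.
    rewrite <- E in Hne. lra. }
  assert (Hw : 0 < W u v).
  { destruct (W_props PU W u v H) as [H0 _]. destruct (Rle_lt_or_eq_dec _ _ H0) as [?|E]; auto.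
    rewrite <- E in Hne. lra. }
  assert (Hq : 0 < outdist PU W v).
  { destruct (q_eq PU W v H) as [E ->]. eapply Rlt_le_trans.
    2: { apply (term_le _ u); auto. intros; apply Rmult_le_pos; apply H. }
    nra. }
  split; auto. unfold info.
  replace (PU u * W u v / (PU u * outdist PU W v)) with (W u v / outdist PU W v) by (field; lra).
  apply Rpower_log2. apply Rdiv_lt_0_compat; auto.
Qed.

Lemma K_bound PU W tau v : Hyp PU W ->
  TT PU W tau v <= Rpower 2 tau * (outdist PU W v * outdist PU W v).
Proof.
  intros H. destruct (Q_props PU W tau v H) as [_ [_ [E3 _]]].
  destruct (q_eq PU W v H) as [E Eq].
  assert (Hq := q_nonneg PU W v H).
  assert (Hr : 0 < Rpower 2 tau) by (unfold Rpower; apply exp_pos).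
  unfold TT.
  apply Rle_trans with (Series (fun u => (Rpower 2 tau * outdist PU W v) * (PU u * W u v))).
  - apply Series_le. 2: apply ex_scal; auto.
    intros u. destruct (Y_props PU W tau v u H) as [[Y0 Y1] _].
    assert (P0 : 0 <= PU u) by apply H. destruct (W_props PU W u v H) as [W0 W1].
    split. apply Rmult_le_pos; nra.
    unfold Yf. destruct (ab_props PU W tau u v) as [_ [Aa [[A0 A1] _]]].
    destruct (Req_dec (PU u * W u v) 0) as [Z|Z].
    + replace (PU u * (W u v * aa PU W tau u v * (W u v * aa PU W tau u v)))
        with ((PU u * W u v) * (W u v * aa PU W tau u v * aa PU W tau u v)) by ring.
      rewrite Z. nra.
    + destruct (info_pos PU W u v H Z) as [Hq' Hi].
      unfold aa, indic, leRb in *. destruct (Rle_dec (info PU W u v) tau) as [Hle|Hle].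
      * assert (W u v / outdist PU W v <= Rpower 2 tau).
        { rewrite <- Hi. apply Rle_Rpower; lra. }
        assert (W u v <= Rpower 2 tau * outdist PU W v).
        { apply Rmult_le_reg_r with (/ outdist PU W v). apply Rinv_0_lt_compat; auto.
          replace (Rpower 2 tau * outdist PU W v * / outdist PU W v) with (Rpower 2 tau) by (field; lra).
          exact H0. }
        assert (0 <= PU u * W u v) by nra. nra.
      * apply Rle_trans with 0; [right; ring | repeat apply Rmult_le_pos; lra].
  - rewrite Series_scal_l. rewrite <- Eq. lra.
Qed.

Lemma D_eq PU W tau v : Hyp PU W ->
  outdist PU W v * sqrt (ssum (fun u => (PU u * W u v / outdist PU W v)
                         * Rpower 2 (info PU W u v)
                         * indic (leRb (info PU W u v) tau))) = sqrt (TT PU W tau v).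
Proof.
  intros H. destruct (Q_props PU W tau v H) as [_ [_ [E3 [_ [_ [_ T0]]]]]].
  destruct (q_eq PU W v H) as [E Eq].
  assert (Hq := q_nonneg PU W v H).
  assert (P0 : forall u v, 0 <= PU u * W u v) by (intros; apply Rmult_le_pos; apply H).
  destruct (Req_dec (outdist PU W v) 0) as [Z|Z].
  - rewrite Z. rewrite Eq in Z. pose proof (Series_zero_terms _ (fun u => P0 u v) E Z) as ZT.
    unfold TT. rewrite (Series_ext _ (fun _ => 0)). rewrite Series_const0, sqrt_0. ring.
    intros u. unfold Yf. specialize (ZT u). simpl in ZT.
    replace (PU u * (W u v * aa PU W tau u v * (W u v * aa PU W tau u v)))
      with ((PU u * W u v) * (W u v * aa PU W tau u v * aa PU W tau u v)) by ring.
    rewrite ZT. ring.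
  - assert (Hq' : 0 < outdist PU W v) by lra.
    set (q := outdist PU W v) in *.
    assert (TE : forall u, PU u * W u v / q * Rpower 2 (info PU W u v) * indic (leRb (info PU W u v) tau)
               = / (q * q) * (PU u * (Yf PU W tau v u * Yf PU W tau v u))).
    { intros u. unfold Yf. destruct (ab_props PU W tau u v) as [_ [Aa _]].
      fold (aa PU W tau u v).
      destruct (Req_dec (PU u * W u v) 0) as [Z'|Z'].
      - replace (PU u * (W u v * aa PU W tau u v * (W u v * aa PU W tau u v)))
          with ((PU u * W u v) * (W u v * aa PU W tau u v * aa PU W tau u v)) by ring.
        rewrite Z'. unfold Rdiv. ring.
      - destruct (info_pos PU W u v H Z') as [_ Hi]. fold q in Hi. rewrite Hi.
        replace (W u v * aa PU W tau u v * (W u v * aa PU W tau u v))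
          with (W u v * W u v * (aa PU W tau u v * aa PU W tau u v)) by ring.
        rewrite Aa. field. lra. }
    rewrite ssum_Series.
    2: { apply (ex_ext (fun u => / (q * q) * (PU u * (Yf PU W tau v u * Yf PU W tau v u)))).
         intros; rewrite TE; auto. apply ex_scal; auto. }
    rewrite (Series_ext _ _ TE). rewrite Series_scal_l. fold (TT PU W tau v).
    rewrite sqrt_mult_alt. 2: { apply Rlt_le, Rinv_0_lt_compat. nra. }
    rewrite Rinv_mult. rewrite sqrt_square. 2: { apply Rlt_le, Rinv_0_lt_compat; auto. }
    field. lra.
Qed.

Lemma Q2_sum PU W tau : Hyp PU W ->
  ex_series (Q2 PU W tau) /\ Series (Q2 PU W tau) = prob_Ac PU W tau.
Proof.
  intros H.
  set (f := fun u v => PU u * W u v * indic (negb (leRb (info PU W u v) tau))).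
  assert (Hb : forall u v, 0 <= f u v <= PU u * W u v).
  { intros u v. unfold f. destruct (ab_props PU W tau u v) as [_ [_ [_ [B0 B1]]]].
    unfold bb in *. assert (0 <= PU u * W u v) by (apply Rmult_le_pos; apply H). nra. }
  assert (Hf0 : forall u v, 0 <= f u v) by (intros; apply Hb).
  assert (Hf1 : forall u, ex_series (f u)).
  { intros u. apply (ex_le _ (fun v => PU u * W u v)).
    intros v; rewrite Rabs_pos_eq; apply Hb. apply ex_scal, (W_ex PU W u H). }
  assert (Hf2 : forall u, Series (f u) <= PU u).
  { intros u. eapply Rle_trans. apply (Series_le _ (fun v => PU u * W u v)); auto.
    apply ex_scal, (W_ex PU W u H). rewrite Series_scal_l. destruct H as [_ [_ H]].
    rewrite (is_series_unique _ _ (H u)). lra. }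
  assert (Hf3 : ex_series (fun u => Series (f u))).
  { apply (ex_le _ PU). intros u. rewrite Rabs_pos_eq. auto. apply Series_nonneg; auto.
    apply prob_ex, H. }
  destruct (tonelli f Hf0 Hf1 Hf3) as [T1 [T2 T3]].
  assert (EQ : forall v, Q2 PU W tau v = Series (fun u => f u v)).
  { intros v. unfold Q2. apply Series_ext. intros u. unfold Zf, f, bb. ring. }
  split. apply (ex_ext (fun v => Series (fun u => f u v))); auto.
  rewrite (Series_ext _ _ EQ), T3. unfold prob_Ac.
  rewrite (functional_extensionality (fun u => ssum (fun v => PU u * W u v * indic (negb (leRb (info PU W u v) tau))))
    (fun u => Series (f u))). symmetry; apply ssum_Series; auto.
  intros u. apply ssum_Series. apply Hf1.
Qed.

Lemma delta_props PU W M tau : Hyp PU W ->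
  ex_series (fun v => sqrt (TT PU W tau v)) /\
  delta' PU W M tau = / (2 * sqrt (INR M)) * Series (fun v => sqrt (TT PU W tau v)) /\
  Series (fun v => sqrt (TT PU W tau v)) <= sqrt (Rpower 2 tau).
Proof.
  intros H. destruct (q_sum PU W H) as [Eq Sq].
  assert (B : forall v, 0 <= sqrt (TT PU W tau v) <= sqrt (Rpower 2 tau) * outdist PU W v).
  { intros v. split. apply sqrt_pos.
    eapply Rle_trans. apply sqrt_le_1_alt, (K_bound PU W tau v H).
    assert (Hr : 0 < Rpower 2 tau) by (unfold Rpower; apply exp_pos).
    rewrite sqrt_mult_alt by lra. rewrite sqrt_square by (apply q_nonneg; auto). lra. }
  assert (E : ex_series (fun v => sqrt (TT PU W tau v))).
  { apply (ex_le _ (fun v => sqrt (Rpower 2 tau) * outdist PU W v)).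
    intros v; rewrite Rabs_pos_eq; apply B. apply ex_scal; auto. }
  split; auto. split.
  - unfold delta'. f_equal.
    rewrite (functional_extensionality _ (fun v => sqrt (TT PU W tau v))).
    apply ssum_Series; auto. intros v. apply D_eq; auto.
  - eapply Rle_trans. apply (Series_le _ (fun v => sqrt (Rpower 2 tau) * outdist PU W v)); auto.
    apply ex_scal; auto. rewrite Series_scal_l, Sq. lra.
Qed.

Lemma part2 PU W M tau : Hyp PU W -> (1 <= M)%nat ->
  delta' PU W M tau <= / 2 * sqrt (Rpower 2 tau / INR M).
Proof.
  intros H HM. destruct (delta_props PU W M tau H) as [_ [-> B]].
  assert (HM' : 0 < INR M) by (apply lt_0_INR; lia).
  assert (Hs : 0 < sqrt (INR M)) by (apply sqrt_lt_R0; auto).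
  rewrite sqrt_div_alt by auto.
  replace (/ 2 * (sqrt (Rpower 2 tau) / sqrt (INR M))) with (/ (2 * sqrt (INR M)) * sqrt (Rpower 2 tau))
    by (field; lra).
  apply Rmult_le_compat_l; auto. apply Rlt_le, Rinv_0_lt_compat; lra.
Qed.

Lemma fsum_cons g u l : fsum g (u :: l) = g u + fsum g l.
Proof. reflexivity. Qed.

Lemma fsum_nonneg g l : (forall u, 0 <= g u) -> 0 <= fsum g l.
Proof. intros H. induction l as [|a l IH]; [unfold fsum; simpl; lra|]. rewrite fsum_cons. specialize (H a). lra. Qed.

Lemma fsum_minus g c l : fsum (fun u => g u - c) l = fsum g l - INR (length l) * c.
Proof. induction l as [|u l IH]. unfold fsum; simpl; ring. rewrite !fsum_cons, IH.
  cbn [length]. rewrite S_INR. ring. Qed.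

Lemma fold_split PU W tau v l :
  fold_right (fun u acc => W u v + acc) 0 l = fsum (Yf PU W tau v) l + fsum (Zf PU W tau v) l.
Proof.
  induction l as [|u l IH]. unfold fsum; simpl; ring.
  cbn [fold_right]. rewrite IH, !fsum_cons. unfold Yf, Zf.
  destruct (ab_props PU W tau u v) as [A _].
  replace (W u v) with (W u v * (aa PU W tau u v + bb PU W tau u v)) at 1 by (rewrite A; ring).
  ring.
Qed.

Lemma fold_series PU W l : Hyp PU W ->
  ex_series (fun v => fold_right (fun u acc => W u v + acc) 0 l) /\
  Series (fun v => fold_right (fun u acc => W u v + acc) 0 l) = INR (length l).
Proof.
  intros H. destruct (FL W l (fun u => W_ex PU W u H)) as [E1 E2]. split; auto.
  rewrite E2. clear E1 E2. induction l as [|u l IH]. reflexivity.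
  cbn [fold_right length]. rewrite IH, S_INR. destruct H as [_ [_ H]].
  rewrite (is_series_unique _ _ (H u)). ring.
Qed.

Definition Xf PU W tau M l v := / INR M * fsum (Yf PU W tau v) l - Q1 PU W tau v.
Definition Gf PU W tau M l v :=
  Rabs (Xf PU W tau M l v) + / INR M * fsum (Zf PU W tau v) l + Q2 PU W tau v.

Lemma abs_sub_le a b : 0 <= a -> 0 <= b -> Rabs (a - b) <= a + b.
Proof. intros. unfold Rabs. destruct Rcase_abs; lra. Qed.

Lemma G_props PU W tau M l : Hyp PU W -> (1 <= M)%nat -> length l = M ->
  (forall v, Rabs (codebook_out W l v - outdist PU W v) <= Gf PU W tau M l v) /\
  (forall v, 0 <= Gf PU W tau M l v) /\
  ex_series (Gf PU W tau M l) /\ Series (Gf PU W tau M l) <= 2.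
Proof.
  intros H HM Hl.
  assert (HM' : 0 < INR M) by (apply lt_0_INR; lia).
  assert (HiM : 0 < / INR M) by (apply Rinv_0_lt_compat; auto).
  assert (SY : forall v, 0 <= fsum (Yf PU W tau v) l).
  { intros v. apply fsum_nonneg. intros u; apply Y_props; auto. }
  assert (SZ : forall v, 0 <= fsum (Zf PU W tau v) l).
  { intros v. apply fsum_nonneg. intros u; apply Y_props; auto. }
  assert (G1 : forall v, Rabs (codebook_out W l v - outdist PU W v) <= Gf PU W tau M l v).
  { intros v. unfold codebook_out, Gf, Xf. rewrite Hl, (fold_split PU W tau v l).
    destruct (Q_props PU W tau v H) as [_ [_ [_ [Q12 [Q10 [Q20 _]]]]]].
    rewrite <- Q12.
    replace (/ INR M * (fsum (Yf PU W tau v) l + fsum (Zf PU W tau v) l) - (Q1 PU W tau v + Q2 PU W tau v))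
      with ((/ INR M * fsum (Yf PU W tau v) l - Q1 PU W tau v) + (/ INR M * fsum (Zf PU W tau v) l - Q2 PU W tau v))
      by ring.
    eapply Rle_trans. apply Rabs_triang.
    pose proof (abs_sub_le (/ INR M * fsum (Zf PU W tau v) l) (Q2 PU W tau v)).
    assert (0 <= / INR M * fsum (Zf PU W tau v) l) by (apply Rmult_le_pos; auto; lra).
    specialize (H0 H1 Q20). lra. }
  assert (G2 : forall v, 0 <= Gf PU W tau M l v <=
     / INR M * fold_right (fun u acc => W u v + acc) 0 l + outdist PU W v).
  { intros v. unfold Gf, Xf. rewrite (fold_split PU W tau v l).
    destruct (Q_props PU W tau v H) as [_ [_ [_ [Q12 [Q10 [Q20 _]]]]]].
    rewrite <- Q12.
    assert (0 <= / INR M * fsum (Zf PU W tau v) l) by (apply Rmult_le_pos; auto; lra).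
    assert (0 <= / INR M * fsum (Yf PU W tau v) l) by (apply Rmult_le_pos; auto; lra).
    pose proof (abs_sub_le _ _ H1 Q10). pose proof (Rabs_pos (/ INR M * fsum (Yf PU W tau v) l - Q1 PU W tau v)).
    split; lra. }
  destruct (fold_series PU W l H) as [F1 F2]. destruct (q_sum PU W H) as [S1 S2].
  assert (EH : ex_series (fun v => / INR M * fold_right (fun u acc => W u v + acc) 0 l + outdist PU W v)).
  { apply ex_plus; auto. apply ex_scal; auto. }
  assert (EG : ex_series (Gf PU W tau M l)).
  { eapply ex_le; [|exact EH]. intros v. destruct (G2 v). rewrite Rabs_pos_eq; auto. }
  split; auto. split. intros v; apply G2. split; auto.
  eapply Rle_trans. apply (Series_le _ _ G2 EH).
  rewrite Series_plus, Series_scal_l, F2, S2, Hl. right. field. lra.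
  apply ex_scal; auto. auto.
Qed.

Lemma bnd_X PU W tau M v : Hyp PU W -> bnd M (fun l => Xf PU W tau M l v).
Proof.
  intros H. unfold Xf. unfold Rminus.
  apply (bnd_plus M (fun l => / INR M * fsum (Yf PU W tau v) l) (fun _ => - Q1 PU W tau v)).
  apply bnd_scal. unfold fsum. apply (bnd_fold M _ 1). intros u; apply Y_abs; auto.
  apply bnd_const.
Qed.

Lemma sigma_le PU W tau v : Hyp PU W ->
  Series (fun u => PU u * ((Yf PU W tau v u - Series (fun u => PU u * Yf PU W tau v u)) *
                           (Yf PU W tau v u - Series (fun u => PU u * Yf PU W tau v u))))
  <= TT PU W tau v.
Proof.
  intros H. destruct (Q_props PU W tau v H) as [E1 [_ [E3 _]]].
  fold (Q1 PU W tau v). set (mu := Q1 PU W tau v).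
  rewrite (Series_ext _ (fun u => (PU u * (Yf PU W tau v u * Yf PU W tau v u) - (2 * mu) * (PU u * Yf PU W tau v u)) + (mu * mu) * PU u))
    by (intros; ring).
  rewrite Series_plus, Series_minus, !Series_scal_l, (prob_1 PU (proj1 H)).
  change (Series (fun n => PU n * Yf PU W tau v n)) with mu.
  assert (0 <= mu * mu) by apply Rle_0_sqr. unfold TT. lra.
  auto. apply ex_scal; auto. apply ex_minus; auto. apply ex_scal; auto.
  apply ex_scal, prob_ex, H.
Qed.

Lemma EG PU W tau M v : Hyp PU W -> (1 <= M)%nat ->
  Ecb PU M (fun l => Gf PU W tau M l v) <= sqrt (TT PU W tau v) / sqrt (INR M) + 2 * Q2 PU W tau v.
Proof.
  intros H HM.
  assert (HM' : 0 < INR M) by (apply lt_0_INR; lia).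
  assert (Hp := proj1 H).
  assert (BX := bnd_X PU W tau M v H).
  assert (BZ : bnd M (fun l => fsum (Zf PU W tau v) l)).
  { unfold fsum. apply (bnd_fold M _ 1). intros u; apply Y_abs; auto. }
  unfold Gf.
  rewrite (Ecb_plus PU M Hp (fun l => Rabs (Xf PU W tau M l v) + / INR M * fsum (Zf PU W tau v) l)).
  2: { apply bnd_plus. apply bnd_abs; auto. apply bnd_scal; auto. }
  2: apply bnd_const.
  rewrite (Ecb_plus PU M Hp (fun l => Rabs (Xf PU W tau M l v))).
  2: apply bnd_abs; auto. 2: apply bnd_scal; auto.
  rewrite (Ecb_scal PU M Hp (fun l => fsum (Zf PU W tau v) l)) by auto.
  rewrite Ecb_const by auto.
  assert (EZ : Ecb PU M (fun l => fsum (Zf PU W tau v) l) = INR M * Q2 PU W tau v).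
  { unfold fsum, Q2. apply (Ecb_fold PU M _ 1 Hp). intros u; apply Y_abs; auto. }
  rewrite EZ. replace (/ INR M * (INR M * Q2 PU W tau v)) with (Q2 PU W tau v) by (field; lra).
  cut (Ecb PU M (fun l => Rabs (Xf PU W tau M l v)) <= sqrt (TT PU W tau v) / sqrt (INR M)). lra.
  set (mu := Series (fun u => PU u * Yf PU W tau v u)).
  set (g := fun u => Yf PU W tau v u - mu).
  assert (XE : forall l, length l = M -> Xf PU W tau M l v = / INR M * fsum g l).
  { intros l Hl. unfold Xf, g. rewrite fsum_minus, Hl. unfold Q1. fold mu. field. lra. }
  rewrite (Ecb_ext PU M _ (fun l => sqrt (Xf PU W tau M l v * Xf PU W tau M l v))).
  2: { intros l _. rewrite <- sqrt_Rsqr_abs. reflexivity. }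
  eapply Rle_trans. apply Ecb_sqrt; auto. apply bnd_mult; auto.
  intros l _. apply Rle_0_sqr.
  rewrite (Ecb_ext PU M _ (fun l => (/ INR M * / INR M) * (fsum g l * fsum g l))).
  2: { intros l Hl. rewrite XE by auto. ring. }
  rewrite (Ecb_scal PU M Hp (fun l => fsum g l * fsum g l)).
  2: { apply bnd_mult; unfold fsum; apply (bnd_fold M _ 2); intros u; unfold g;
       unfold Rminus; eapply Rle_trans; try apply Rabs_triang; rewrite Rabs_Ropp;
       destruct (Y_abs PU W tau v u H) as [A _];
       pose proof (Series_pg_bound PU (Yf PU W tau v) 1 Hp (fun u => proj1 (Y_abs PU W tau v u H)));
       fold mu in H0; lra. }
  unfold g, mu. rewrite (Ecb_var PU M (Yf PU W tau v) 1 Hp) by (intros u; apply Y_abs; auto).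
  rewrite <- sqrt_div_alt by auto. apply sqrt_le_1_alt.
  pose proof (sigma_le PU W tau v H).
  unfold Rdiv. replace (/ INR M * / INR M * (INR M * Series (fun u => PU u * ((Yf PU W tau v u - Series (fun u0 => PU u0 * Yf PU W tau v u0)) * (Yf PU W tau v u - Series (fun u0 => PU u0 * Yf PU W tau v u0))))))
    with (/ INR M * Series (fun u => PU u * ((Yf PU W tau v u - Series (fun u0 => PU u0 * Yf PU W tau v u0)) * (Yf PU W tau v u - Series (fun u0 => PU u0 * Yf PU W tau v u0)))))
    by (field; lra).
  rewrite Rmult_comm. apply Rmult_le_compat_r. apply Rlt_le, Rinv_0_lt_compat; auto. auto.
Qed.

Theorem mainTheorem10
  (PU : nat -> R) (W : nat -> nat -> R) (M : nat) (tau : R)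
  (HPU0 : forall u, 0 <= PU u)
  (HPU1 : infinite_sum PU 1)
  (HW0 : forall u v, 0 <= W u v)
  (HW1 : forall u, infinite_sum (W u) 1)
  (HM : (1 <= M)%nat) :
  Ecb PU M (fun l => tv (codebook_out W l) (outdist PU W))
    <= prob_Ac PU W tau + delta' PU W M tau
  /\ delta' PU W M tau <= / 2 * sqrt (Rpower 2 tau / INR M).
Proof.
  assert (H : Hyp PU W).
  { split. split; auto. apply is_series_Reals; auto. split; auto. intros u; apply is_series_Reals; auto. }
  split; [|apply part2; auto].
  assert (Hp := proj1 H).
  assert (HM' : 0 < INR M) by (apply lt_0_INR; lia).
  assert (Hs : 0 < sqrt (INR M)) by (apply sqrt_lt_R0; auto).
  assert (TVb : forall l, length l = M ->
     0 <= tv (codebook_out W l) (outdist PU W) <= / 2 * Series (Gf PU W tau M l)).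
  { intros l Hl. destruct (G_props PU W tau M l H HM Hl) as [G1 [G2 [G3 G4]]].
    assert (E : ex_series (fun v => Rabs (codebook_out W l v - outdist PU W v))).
    { eapply ex_le; [|exact G3]. intros v. rewrite Rabs_Rabsolu. auto. }
    unfold tv. rewrite ssum_Series by auto. split.
    apply Rmult_le_pos. lra. apply Series_nonneg; auto. intros; apply Rabs_pos.
    apply Rmult_le_compat_l. lra. apply Series_le; auto. intros v; split; auto. apply Rabs_pos. }
  assert (GS : forall l, length l = M -> 0 <= Series (Gf PU W tau M l) <= 2).
  { intros l Hl. destruct (G_props PU W tau M l H HM Hl) as [G1 [G2 [G3 G4]]].
    split; auto. apply Series_nonneg; auto. }
  assert (BG : bnd M (fun l => Series (Gf PU W tau M l))).
  { exists 2. intros l Hl. destruct (GS l Hl). rewrite Rabs_pos_eq; lra. }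
  eapply Rle_trans.
  { apply (Ecb_mono PU M Hp _ (fun l => / 2 * Series (Gf PU W tau M l))).
    - exists 1. intros l Hl. destruct (TVb l Hl). destruct (GS l Hl). rewrite Rabs_pos_eq; lra.
    - apply bnd_scal; auto.
    - intros l Hl; apply TVb; auto. }
  rewrite (Ecb_scal PU M Hp (fun l => Series (Gf PU W tau M l))) by auto.
  destruct (Ecb_ton PU M Hp (Gf PU W tau M)) as [T1 T2].
  { intros l Hl v. apply (G_props PU W tau M l H HM Hl). }
  { intros l Hl. apply (G_props PU W tau M l H HM Hl). }
  { exists 2. intros l Hl. apply GS; auto. }
  rewrite <- T2.
  destruct (delta_props PU W M tau H) as [D1 [D2 D3]].
  destruct (Q2_sum PU W tau H) as [Q1' Q2'].
  assert (ER : ex_series (fun v => / sqrt (INR M) * sqrt (TT PU W tau v) + 2 * Q2 PU W tau v)).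
  { apply ex_plus; apply ex_scal; auto. }
  eapply Rle_trans.
  { apply Rmult_le_compat_l. lra.
    apply (Series_le _ (fun v => / sqrt (INR M) * sqrt (TT PU W tau v) + 2 * Q2 PU W tau v)); auto.
    intros v. split.
    - apply Ecb_nonneg; auto.
      exists 2. intros l Hl. destruct (G_props PU W tau M l H HM Hl) as [G1 [G2 [G3 G4]]].
      rewrite Rabs_pos_eq by auto. eapply Rle_trans. apply term_le; auto. auto.
      intros l Hl. apply (G_props PU W tau M l H HM Hl).
    - eapply Rle_trans. apply EG; auto. right. unfold Rdiv. ring. }
  rewrite Series_plus by (apply ex_scal; auto).
  rewrite !Series_scal_l, Q2', D2. right. field. lra.
Qed.
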